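(* Let $\mathcal{M}=(\mathbf A,\perp,\{\mathsf{t},\mathsf{f}\})$ be an $\mathfrak{N}_w$-model and let $x,y$ be distinct propositional variables. Then $h((x\circ y)\Rightarrow(x\Rightarrow y))\perp\mathsf{f}$ for every homomorphism $h$ from the formula algebra into $\mathbf A$ if and only if $\mathbf A$ is trivial (has exactly one element).
   Context: Formulas are built from variables using binary $\otimes,\circ$ and unary ${}^{*}$; in formulas and algebras, $\varphi\Rightarrow\psi:=(\varphi\circ\psi^{*})^{*}$, $\varphi\Leftrightarrow\psi:=(\varphi\Rightarrow\psi)\otimes(\psi\Rightarrow\varphi)$, $\varphi\not\Leftrightarrow\psi:=(\varphi\Leftrightarrow\psi)^{*}$, $\varphi\not\Leftrightarrow\psi\not\Leftrightarrow\chi:=((\varphi\not\Leftrightarrow\psi)\otimes(\varphi\not\Leftrightarrow\chi))\otimes(\psi\not\Leftrightarrow\chi)$. A weak $\mathcal{N}$-algebra is an algebra $(A,\otimes,\circ,{}^{*})$ of type $(2,2,1)$ with $\otimes,\circ$ commutative, $x^{**}=x$, and $(x\otimes y)\circ z=(x\otimes z)\circ y$. With $\mathsf{t}\ne\mathsf{f}$ symbols not in $A$, $\overline A=A\cup\{\mathsf{t},\mathsf{f}\}$, an $\mathfrak{N}_w$-model is $(\mathbf A,\perp,\{\mathsf{t},\mathsf{f}\})$, $\mathbf A$ a weak $\mathcal{N}$-algebra, $\perp\subseteq\overline A\times\overline A$, such that for all $x,y,z\in A$: (a) $x\perp x^{*}$; (b) $x\perp y^{*}$ and $y\perp x^{*}$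 imply $x=y$; (c) $x\perp y$ iff $x\circ y\perp\mathsf{t}$; (d) $x\perp\mathsf{t}$ iff $x^{*}\perp\mathsf{f}$; (e) $x\perp\mathsf{f}$ and $y\perp\mathsf{f}$ iff $x\otimes y\perp\mathsf{f}$; (f) $(x\circ y^{*})^{*}\perp(x\circ y)^{*}$; (g) $x\perp y$ and $x\perp\mathsf{f}$ imply $y\perp\mathsf{t}$; (h) $(x\not\Leftrightarrow y\not\Leftrightarrow z)\perp((x\Rightarrow y)\Rightarrow((y\Rightarrow z)\Rightarrow(x\Rightarrow z)))^{*}$. *)

(* Defs.v *)
(** Weak N-algebras: algebras (A, ⊗, ∘, * ) of type (2,2,1) with nonempty
    carrier (standard convention in universal algebra). *)
Record wNAlg := {
  car :> Type;
  car_inh : inhabited car;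
  tens : car -> car -> car;
  circ : car -> car -> car;
  star : car -> car;
  tens_comm : forall x y, tens x y = tens y x;
  circ_comm : forall x y, circ x y = circ y x;
  star_invol : forall x, star (star x) = x;
  tens_circ_ax : forall x y z, circ (tens x y) z = circ (tens x z) y
}.

Section Ops.
Variable A : wNAlg.
Definition aimp (x y : A) : A := star A (circ A x (star A y)).
Definition aiff (x y : A) : A := tens A (aimp x y) (aimp y x).
Definition anequiv (x y : A) : A := star A (aiff x y).
Definition anequiv3 (x y z : A) : A :=
  tens A (tens A (anequiv x y) (anequiv x z)) (anequiv y z).
End Ops.

Inductive ext (A : Type) : Type :=
| el : A -> ext A
| tv : ext A
| fv : ext A.
Arguments el {A} _.
Arguments tv {A}.
Arguments fv {A}.

Definition Nw_model (A : wNAlg) (perp : ext A -> ext A -> Prop) : Prop :=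
  (forall x : A, perp (el x) (el (star A x))) /\
  (forall x y : A, perp (el x) (el (star A y)) -> perp (el y) (el (star A x)) -> x = y) /\
  (forall x y : A, perp (el x) (el y) <-> perp (el (circ A x y)) tv) /\
  (forall x : A, perp (el x) tv <-> perp (el (star A x)) fv) /\
  (forall x y : A, (perp (el x) fv /\ perp (el y) fv) <-> perp (el (tens A x y)) fv) /\
  (forall x y : A, perp (el (star A (circ A x (star A y)))) (el (star A (circ A x y)))) /\
  (forall x y : A, perp (el x) (el y) -> perp (el x) fv -> perp (el y) tv) /\
  (forall x y z : A,
     perp (el (anequiv3 A x y z))
          (el (star A (aimp A (aimp A x y) (aimp A (aimp A y z) (aimp A x z)))))).

Inductive fm : Type :=
| Var : nat -> fm
| Ftens : fm -> fm -> fm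
| Fcirc : fm -> fm -> fm
| Fstar : fm -> fm.

Definition Fimp (p q : fm) : fm := Fstar (Fcirc p (Fstar q)).

Definition is_hom (A : wNAlg) (h : fm -> A) : Prop :=
  (forall p q, h (Ftens p q) = tens A (h p) (h q)) /\
  (forall p q, h (Fcirc p q) = circ A (h p) (h q)) /\
  (forall p, h (Fstar p) = star A (h p)).

(* Main.v *)
Require Import Defs.
From Stdlib Require Import Arith.

Fixpoint interp (A : wNAlg) (v : nat -> A) (p : fm) : A :=
  match p with
  | Var n => v n
  | Ftens p q => tens A (interp A v p) (interp A v q)
  | Fcirc p q => circ A (interp A v p) (interp A v q)
  | Fstar p => star A (interp A v p)
  end.

Lemma interp_hom (A : wNAlg) v : is_hom A (interp A v).
Proof. repeat split; reflexivity. Qed.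

Theorem proposition4p12 (A : wNAlg) (perp : ext A -> ext A -> Prop)
  (HM : Nw_model A perp) (x y : nat) (Hxy : x <> y) :
  (forall h : fm -> A, is_hom A h ->
     perp (el (h (Fimp (Fcirc (Var x) (Var y)) (Fimp (Var x) (Var y))))) fv)
  <-> (exists a : A, forall b : A, b = a).
Proof.
  destruct HM as (Ha & Hb & Hc & Hd & He & Hf & Hg & Hh).
  assert (F0 : forall z : A, perp (el (star A (circ A z (star A z)))) fv).
  { intro z. apply Hd. apply Hc. apply Ha. }
  split.
  - intros H.
    assert (H1 : forall a b : A, perp (el (circ A a b)) (el (circ A a (star A b)))).
    { intros a b.
      pose (v := fun n => if Nat.eqb n x then a else b).
      specialize (H (interp A v) (interp_hom A v)).
      simpl in H. unfold v in H. rewrite Nat.eqb_refl in H.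
      assert (Hyx : Nat.eqb y x = false) by (apply Nat.eqb_neq; auto).
      rewrite Hyx in H. rewrite star_invol in H.
      apply Hc. apply Hd. exact H. }
    assert (I : forall a b : A, circ A a b = star A (circ A a (star A b))).
    { intros a b. apply Hb.
      - rewrite star_invol. apply H1.
      - apply Hf. }
    assert (K : forall u w : A, perp (el (circ A u w)) fv -> u = w).
    { intros u w Huw. apply Hb.
      - apply Hc. apply Hd. rewrite <- I. exact Huw.
      - apply Hc. apply Hd. rewrite <- I. rewrite circ_comm. exact Huw. }
    assert (F1 : forall u : A, perp (el (circ A u u)) fv).
    { intro u. rewrite (I u u). apply F0. }
    assert (T : forall p q : A, tens A p (tens A p q) = q).
    { intros p q. apply K. rewrite <- tens_circ_ax. apply F1. }
    destruct (car_inh A) as [c].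
    assert (FA : forall p : A, perp (el p) fv).
    { intro p. pose proof (F1 c) as Hq. rewrite <- (T p (circ A c c)) in Hq.
      apply He in Hq. apply Hq. }
    exists c. intro b. symmetry. apply K. apply FA.
  - intros [a Ha1] h _.
    pose proof (F0 a) as G.
    rewrite (Ha1 (h _)). rewrite (Ha1 (star A _)) in G. exact G.
Qed.
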